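(* Let $G=(\mathbb Z/2)^3$ and write $H^*(G,\mathbb F_2)=\mathbb F_2[x,y,z]$ with $x,y,z$ of degree one dual to the standard basis $e_1,e_2,e_3$ of $G$. Let $\alpha\in H^4(G,\mathbb Z)$ be the integral class whose mod $2$ reduction is $Sq^1(xyz)=x^2yz+xy^2z+xyz^2$. For $g=ae_1+be_2+ce_3\in G$ with $a,b,c\in\{0,1\}$ (written multiplicatively as $g=x^ay^bz^c$), the inverse transgression $\theta_g^*:H^4(G,\mathbb Z)\to H^3(G,\mathbb Z)$ satisfies, after mod $2$ reduction, $$\theta_g^*(\alpha)=a(y^2z+yz^2)+b(x^2z+xz^2)+c(x^2y+xy^2).$$ In particular $\theta_g^*(\alpha)\neq 0$ for every $g\neq 1$.
   Context: For an elementary abelian $2$-group $G$ and $k>0$, mod $2$ reduction $H^k(G,\mathbb Z)\to H^k(G,\mathbb F_2)$ is injective, and integral classes are identified with their reductions. For a finite group $G$ and $g\in G$ with centralizer $Z_G(g)$ (here $Z_G(g)=G$), the inverse transgression $\theta_g$ is the cochain map from inhomogeneous cochains $C^{k+1}(G,\mathbb Z)$ to $C^k(Z_G(g),\mathbb Z)$ given by $\theta_g(\phi)(u_1,\dots,u_k)=(-1)^k\phi(g,u_1,\dots,u_k)+\sum_{i=1}^k(-1)^{i+k}\phi(u_1,\dots,u_i,g_i,u_{i+1},\dots,u_k)$, where $g_i=(u_1\cdots u_i)^{-1}g\,u_1\cdots u_i$; $\theta_g^*$ is the induced map in cohomology. Equivalently, if $\rho_g:Z_G(g)\times\mathbb Z\to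 G$, $(u,t^i)\mapsto ug^i$, and $\nu$ generates $H^1(\mathbb Z,\mathbb Z)$, then $\rho_g^*(w)=\mathrm{res}^G_{Z_G(g)}(w)\otimes1+\theta_g^*(w)\otimes\nu$. *)

(* Defs.v *)
From mathcomp Require Import all_boot all_algebra all_fingroup.
Set Implicit Arguments. Unset Strict Implicit. Unset Printing Implicit Defensive.
Import GRing.Theory.

Section Cochains.
Variable gT : finGroupType.

(* A k-cochain is a function on k-lists of group elements (only its values
   on lists of length k matter). *)
Definition cochain (M : Type) := seq gT -> M.

Definition sgnz {M : zmodType} (b : bool) (x : M) : M := if b then (- x)%R else x.

Definition mulpair (i : nat) (s : seq gT) : seq gT :=
  take i s ++ (nth 1%g s i * nth 1%g s i.+1)%g :: drop i.+2 s.

(* coboundary, evaluated on a (k+1)-list s = (g_1,...,g_{k+1}):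
   f(g_2..g_{k+1}) + sum_{i=1}^k (-1)^i f(..,g_i g_{i+1},..) + (-1)^{k+1} f(g_1..g_k) *)
Definition coboundary {M : zmodType} (f : cochain M) : cochain M := fun s =>
  (f (behead s)
   + \sum_(i < (size s).-1) sgnz (odd i.+1) (f (mulpair i s))
   + sgnz (odd (size s)) (f (take (size s).-1 s)))%R.

Definition is_cocycle {M : zmodType} (k : nat) (f : cochain M) : Prop :=
  forall s, size s = k.+1 -> coboundary f s = 0%R.

Definition is_coboundary {M : zmodType} (k : nat) (f : cochain M) : Prop :=
  exists psi : cochain M, forall s, size s = k -> f s = coboundary psi s.

Definition cohomologous {M : zmodType} (k : nat) (f1 f2 : cochain M) : Prop :=
  is_coboundary k (fun s => f1 s - f2 s)%R.

Definition prodg (s : seq gT) : gT := foldr (fun a b => a * b)%g 1%g s.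

(* inverse transgression theta_g on cochains C^{k+1}(G,Z) -> C^k(Z_G(g),Z):
   theta_g(phi)(u_1..u_k) = (-1)^k phi(g,u_1..u_k)
      + sum_{i=1}^k (-1)^{i+k} phi(u_1..u_i, g_i, u_{i+1}..u_k),
   g_i = (u_1...u_i)^{-1} g (u_1...u_i) = g ^ (u_1...u_i). *)
Definition theta (g : gT) (phi : cochain int) : cochain int := fun u =>
  (sgnz (odd (size u)) (phi (g :: u))
   + \sum_(i < size u)
       sgnz (odd (i.+1 + size u))
         (phi (take i.+1 u ++ (g ^ prodg (take i.+1 u))%g :: drop i.+1 u)))%R.

Definition red2 (phi : cochain int) : cochain 'F_2 := fun s => ((phi s)%:~R)%R.

End Cochains.

(* G = (Z/2)^3, written additively as row vectors over F_2 (the group law of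
   the finGroupType structure on 'rV['F_2]_3 is vector addition). *)
Definition G := 'rV['F_2]_3.

(* cup product of degree-one cocycles: the monomial x_{l_1} ... x_{l_n} is
   represented by the cocycle (g_1..g_n) |-> prod_j (g_j)_{l_j}. *)
Definition mono (l : seq 'I_3) : cochain G 'F_2 :=
  fun s => (\prod_(p <- zip l s) p.2 ord0 p.1)%R.

Definition ix : 'I_3 := @Ordinal 3 0 isT.
Definition iy : 'I_3 := @Ordinal 3 1 isT.
Definition iz : 'I_3 := @Ordinal 3 2 isT.

Definition sq1xyz : cochain G 'F_2 := fun s =>
  (mono [:: ix; ix; iy; iz] s + mono [:: ix; iy; iy; iz] s
   + mono [:: ix; iy; iz; iz] s)%R.

Definition theta_target (g : G) : cochain G 'F_2 := fun s =>
  (g ord0 ix * (mono [:: iy; iy; iz] s + mono [:: iy; iz; iz] s)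
   + g ord0 iy * (mono [:: ix; ix; iz] s + mono [:: ix; iz; iz] s)
   + g ord0 iz * (mono [:: ix; ix; iy] s + mono [:: ix; iy; iy] s))%R.

(* Main.v *)
Require Import Defs.
From mathcomp Require Import all_boot all_algebra all_fingroup ring.
Set Implicit Arguments. Unset Strict Implicit. Unset Printing Implicit Defensive.
Import GRing.Theory.
Local Open Scope ring_scope.

Lemma mulG (g h : G) : (g * h)%g = g + h.
Proof. by []. Qed.
Lemma oneG : (1%g : G) = 0. Proof. by []. Qed.
Lemma invG (g : G) : (g^-1)%g = - g. Proof. by []. Qed.
Lemma conjG (g h : G) : (g ^ h)%g = g.
Proof. by rewrite /conjg !mulG invG addrCA addNr addr0. Qed.
Lemma mulGC (g h : G) : (g * h = h * g)%g. Proof. by rewrite !mulG addrC. Qed.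
Lemma coD (g h : G) i : (g * h)%g ord0 i = g ord0 i + h ord0 i. Proof. by rewrite mulG mxE. Qed.
Lemma co1 i : (1%g : G) ord0 i = 0. Proof. by rewrite oneG mxE. Qed.

Lemma F2P (x : 'F_2) : x = 0 \/ x = 1.
Proof. case: x => [[|[|n]] Hn]; [left|right|]; try exact: val_inj. by []. Qed.
Lemma two0 : (2%:R : 'F_2) = 0. Proof. by apply/eqP. Qed.
Lemma F2_2 (x y X : 'F_2) : x = y + 2%:R * X -> x = y.
Proof. by rewrite two0 mul0r addr0. Qed.
Lemma oppF2 (x : 'F_2) : - x = x.
Proof. by case: (F2P x) => ->; apply/eqP. Qed.
Lemma mulGG (u : G) : (u * u)%g = 1%g.
Proof. rewrite mulG oneG; apply/matrixP => i j; rewrite !mxE.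
by case: (F2P (u i j)) => ->; apply/eqP. Qed.

Definition bitZ (t : 'F_2) : int := (nat_of_ord t)%:Z.
Lemma bitZD s t : bitZ (s + t) = bitZ s + bitZ t - 2 * bitZ s * bitZ t.
Proof. by case: (F2P s) => ->; case: (F2P t) => ->. Qed.
Lemma bitZ_red t : (bitZ t)%:~R = t.
Proof. by case: (F2P t) => ->; apply/eqP. Qed.

Definition bx (g : G) (i : 'I_3) : int := bitZ (g ord0 i).
Lemma bxM g h i : bx (g * h)%g i = bx g i + bx h i - 2 * bx g i * bx h i.
Proof. by rewrite /bx coD bitZD. Qed.

Definition P : cochain G int := fun s =>
  let a := nth 1%g s 0 in let b := nth 1%g s 1 in
  let c := nth 1%g s 2 in let d := nth 1%g s 3 in
  bx a ix * bx b ix * bx c iy * bx d iz - bx a ix * bx b iy * bx c iy * bx d iz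
  + bx a ix * bx b iy * bx c iz * bx d iz.

Lemma P_cocycle : is_cocycle 4 P.
Proof.
move=> s; case: s => [|a [|b [|c [|d [|e [|? ?]]]]]] //= _.
rewrite /coboundary /= !big_ord_recr big_ord0 /= /mulpair /= /P /= !bxM.
ring.
Qed.

Lemma cob0 (s : seq G) : coboundary (fun _ : seq G => 0 : 'F_2) s = 0.
Proof.
have sg0 : forall b, sgnz b (0 : 'F_2) = 0 by case; rewrite /sgnz ?oppr0.
by rewrite /coboundary big1 ?sg0 ?addr0 // => i _; rewrite sg0.
Qed.

Lemma P_red : cohomologous 4 (red2 P) sq1xyz.
Proof.
exists (fun _ => 0) => s; case: s => [|a [|b [|c [|d [|? ?]]]]] //= _.
rewrite cob0 // /red2 /P /sq1xyz /mono /= !big_cons big_nil /=.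
rewrite !rmorphD !rmorphN !rmorphM /= /bx !bitZ_red.
apply: (F2_2 (X := - (a ord0 ix * b ord0 iy * c ord0 iy * d ord0 iz))).
ring.
Qed.

Definition psi' (g : G) (psi : cochain G 'F_2) : cochain G 'F_2 := fun t =>
  psi [:: g; nth 1%g t 0; nth 1%g t 1] - psi [:: nth 1%g t 0; g; nth 1%g t 1]
  + psi [:: nth 1%g t 0; nth 1%g t 1; g].

Lemma thetaE g (f : cochain G int) a b d :
  theta g f [:: a; b; d] = - f [:: g; a; b; d] + f [:: a; g; b; d]
     - f [:: a; b; g; d] + f [:: a; b; d; g].
Proof. rewrite /theta /= !big_ord_recr big_ord0 /= !conjG. ring. Qed.

Lemma part2a (phi : cochain G int) (psi : cochain G 'F_2) g :
  (forall s, size s = 4 -> red2 phi s - sq1xyz s = coboundary psi s) ->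
  forall a b d, red2 (theta g phi) [:: a; b; d] - theta_target g [:: a; b; d]
              = coboundary (psi' g psi) [:: a; b; d].
Proof.
move=> H a b d.
have H' : forall t, size t = 4 -> (phi t)%:~R = sq1xyz t + coboundary psi t.
  by move=> t /H <-; rewrite /red2 addrC subrK.
rewrite /red2 thetaE !rmorphD !rmorphN /= !H' //.
rewrite /sq1xyz /theta_target /mono /psi' /coboundary /= !big_ord_recr !big_ord0 /=.
rewrite /mulpair /= !big_cons !big_nil /=.
rewrite (mulGC a g) (mulGC b g) (mulGC d g).
apply: (F2_2 (X := - g ord0 ix * (a ord0 iy * b ord0 iy * d ord0 iz + a ord0 iy * b ord0 iz * d ord0 iz)
                  - g ord0 iy * a ord0 ix * b ord0 ix * d ord0 iz)).
ring.
Qed.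

Definition sig3 (f : cochain G 'F_2) (u v : G) : 'F_2 :=
  f [:: u; u; v] + f [:: u; v; u] + f [:: v; u; u]
  + f [:: 1%g; 1%g; v] + f [:: 1%g; v; 1%g] + f [:: v; 1%g; 1%g].

Lemma sig3_cob (rho : cochain G 'F_2) u v : sig3 (coboundary rho) u v = 0.
Proof.
rewrite /sig3 /coboundary /= !big_ord_recr !big_ord0 /= /mulpair /=.
rewrite !mulGG !mul1g !mulg1 (mulGC v u).
apply: (F2_2 (X := rho [:: u; (u * v)%g] - rho [:: (u * v)%g; u])).
ring.
Qed.

Definition e (i : 'I_3) : G := delta_mx ord0 i.
Lemma ecoord i k : (e i) ord0 k = (i == k)%:R.
Proof. by rewrite /e mxE eqxx /= eq_sym. Qed.

Lemma pair_x g : sig3 (theta_target g) (e iy) (e iz) = g ord0 ix.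
Proof.
rewrite /sig3 /theta_target /mono /= !big_cons !big_nil /= !ecoord !co1 /=.
ring.
Qed.
Lemma pair_y g : sig3 (theta_target g) (e ix) (e iz) = g ord0 iy.
Proof.
rewrite /sig3 /theta_target /mono /= !big_cons !big_nil /= !ecoord !co1 /=.
ring.
Qed.
Lemma pair_z g : sig3 (theta_target g) (e ix) (e iy) = g ord0 iz.
Proof.
rewrite /sig3 /theta_target /mono /= !big_cons !big_nil /= !ecoord !co1 /=.
ring.
Qed.

Lemma part2b (phi eta : cochain G int) (psi : cochain G 'F_2) g :
  (forall s, size s = 4 -> red2 phi s - sq1xyz s = coboundary psi s) ->
  (forall t, size t = 3 -> theta g phi t = coboundary eta t) ->
  forall a b d, theta_target g [:: a; b; d] =
     coboundary (fun t => (eta t)%:~R - psi' g psi t) [:: a; b; d].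
Proof.
move=> H He a b d.
have := part2a g H a b d.
rewrite /red2 He // => E.
rewrite -[theta_target _ _](subKr (coboundary eta [:: a; b; d])%:~R) E.
rewrite /coboundary /= !big_ord_recr !big_ord0 /=.
rewrite !rmorphD !rmorphN /=.
ring.
Qed.

Local Close Scope ring_scope.

Theorem lemma5p2 :
  (exists phi : cochain G int,
      is_cocycle 4 phi /\ cohomologous 4 (red2 phi) sq1xyz) /\
  (forall phi : cochain G int,
      is_cocycle 4 phi -> cohomologous 4 (red2 phi) sq1xyz ->
      forall g : G,
        cohomologous 3 (red2 (theta g phi)) (theta_target g) /\
        (g <> 1%g -> ~ is_coboundary 3 (theta g phi))).
Proof.
split; first by exists P; split; [exact: P_cocycle | exact: P_red].
move=> phi _ [psi H] g; split.
  exists (psi' g psi) => s; case: s => [|a [|b [|d [|? ?]]]] //= _.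
  exact: (part2a g H).
move=> g1 [eta He].
have T : forall a b d, theta_target g [:: a; b; d] =
     coboundary (fun t => ((eta t)%:~R - psi' g psi t)%R) [:: a; b; d].
  exact: (@part2b phi eta psi g H He).
have Z : forall u v, sig3 (theta_target g) u v = 0%R.
  by move=> u v; rewrite /sig3 !T; exact: (sig3_cob (fun t => ((eta t)%:~R - psi' g psi t)%R) u v).
apply: g1; rewrite oneG; apply/matrixP => i j; rewrite mxE (ord1 i).
case: j => [[|[|[|n]]] Hj] //.
- by rewrite -(Z (e iy) (e iz)) pair_x; congr (g _ _); exact: val_inj.
- by rewrite -(Z (e ix) (e iz)) pair_y; congr (g _ _); exact: val_inj.
- by rewrite -(Z (e ix) (e iy)) pair_z; congr (g _ _); exact: val_inj.
Qed.
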